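(* Fix a positive integer $m$ and let $1\le j\le m$. Let $\pi\sim\mathcal{S}_{m,n}$ be uniform, and let $T_j$ be the smallest index $t$ such that $\pi_t$ is the $j$-th occurrence of some card type in $\pi$ (equivalently, the largest $t$ such that $\{\pi_1,\dots,\pi_{t-1}\}$ contains no card type with multiplicity at least $j$). If $t=\gamma n^{1-1/j}$, where $\gamma>0$ may depend on $n$, then \[\Pr[T_j>t]=1-O(\gamma^{j})\quad\text{and}\quad \Pr[T_j>t]=O(\gamma^{-j}),\] where the implicit constants may depend on $m$.
   Context: $\mathcal{S}_{m,n}$ is the set of words over the alphabet $[n]=\{1,\dots,n\}$ in which each symbol appears exactly $m$ times; $\pi\sim\mathcal{S}_{m,n}$ denotes a uniformly random element, and $\pi_t$ its $t$-th letter. Asymptotic notation is as $n\to\infty$ with $m$ fixed. *)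

(* Defs.v *)
From HB Require Import structures.
From mathcomp Require Import all_boot all_order all_algebra.
From mathcomp Require Import reals exp.
Set Implicit Arguments. Unset Strict Implicit. Unset Printing Implicit Defensive.
Import Order.TTheory GRing.Theory Num.Theory.
Local Open Scope ring_scope.

(* A word of length m*n over the alphabet 'I_n (0-based encoding of [n]). *)
Definition word (m n : nat) := (m * n)%N.-tuple 'I_n.

Definition inS (m n : nat) (w : word m n) : bool :=
  [forall x : 'I_n, count_mem x w == m].

(* T_j(s): the smallest 1-based index t such that s_t is the j-th occurrence
   of its letter in s, i.e. count of s_t among s_1..s_t equals j.
   (If no such index exists, returns size s + 1; this never happens on S_{m,n}
   when 1 <= j <= m.) Letters are encoded as nats. *)
Definition Tj (j : nat) (s : seq nat) : nat :=
  (find (fun i => count_mem (nth 0%N s i) (take i.+1 s) == j) (iota 0 (size s))).+1.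

Definition probTgt (R : realType) (m n j : nat) (t : R) : R :=
  (#|[set w : word m n | inS w && (t < (Tj j (map val w))%:R)]|%:R)
  / (#|[set w : word m n | inS w]|%:R).

(* Main.v *)
Require Import Defs.
From HB Require Import structures.
From mathcomp Require Import all_boot all_order all_algebra.
From mathcomp Require Import reals exp.
From mathcomp Require Import all_fingroup.
From mathcomp Require Import ring lra zify.
Set Implicit Arguments. Unset Strict Implicit. Unset Printing Implicit Defensive.
Import Order.TTheory GRing.Theory Num.Theory.
Local Open Scope ring_scope.
Fixpoint msum (R : realType) (k : nat) (F : seq bool -> R) : R :=
  if k is k'.+1 then msum k' (fun mk => F (true :: mk)) + msum k' (fun mk => F (false :: mk))
  else F [::].

Lemma msum_ext (R : realType) k (F G : seq bool -> R) :
  (forall mk, size mk = k -> F mk = G mk) -> msum k F = msum k G.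
Proof.
elim: k F G => [|k IH] F G H /=; first by apply: H.
by congr (_ + _); apply: IH => mk Hs; apply: H; rewrite /= Hs.
Qed.

Lemma msum_add (R : realType) k (F G : seq bool -> R) :
  msum k (fun mk => F mk + G mk) = msum k F + msum k G.
Proof.
elim: k F G => [|k IH] F G //=.
by rewrite IH IH addrACA.
Qed.

Lemma msum_scale (R : realType) k (a : R) (F : seq bool -> R) :
  msum k (fun mk => a * F mk) = a * msum k F.
Proof.
elim: k F => [|k IH] F //=.
by rewrite IH IH mulrDr.
Qed.

Lemma msum_sum (R : realType) (I : finType) (A : {pred I}) k (F : I -> seq bool -> R) :
  msum k (fun mk => \sum_(i in A) F i mk) = \sum_(i in A) msum k (F i).
Proof.
elim: k F => [|k IH] F //=.
by rewrite IH IH -big_split.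
Qed.

Definition wt (R : realType) (u : R) (mk : seq bool) : R :=
  \prod_(b <- mk) (if b then u else 1 - u).

Definition PB (R : realType) (u : R) k (f : nat -> R) : R :=
  msum k (fun mk => wt u mk * f (count id mk)).

Lemma PB0 (R : realType) (u : R) f : PB u 0 f = f 0%N.
Proof. by rewrite /PB /= /wt big_nil mul1r. Qed.

Lemma PBS (R : realType) (u : R) k f :
  PB u k.+1 f = u * PB u k (fun c => f c.+1) + (1 - u) * PB u k f.
Proof.
rewrite /PB /= -!msum_scale; congr (_ + _); apply: msum_ext => mk _;
by rewrite /wt big_cons /= mulrA.
Qed.

Lemma PB_ext (R : realType) (u : R) k f g :
  (forall c, f c = g c) -> PB u k f = PB u k g.
Proof. by move=> H; apply: msum_ext => mk _; rewrite H. Qed.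

Lemma PB_add (R : realType) (u : R) k f g :
  PB u k (fun c => f c + g c) = PB u k f + PB u k g.
Proof. by rewrite /PB -msum_add; apply: msum_ext => mk _; rewrite mulrDr. Qed.

Lemma PB_scale (R : realType) (u : R) k a f :
  PB u k (fun c => a * f c) = a * PB u k f.
Proof. by rewrite /PB -msum_scale; apply: msum_ext => mk _; rewrite mulrCA. Qed.

Lemma PB_const (R : realType) (u : R) k a : PB u k (fun _ => a) = a.
Proof.
elim: k a => [|k IH] a; first by rewrite PB0.
by rewrite PBS !IH -mulrDl addrC subrK mul1r.
Qed.

Lemma PB_opp (R : realType) (u : R) k f :
  PB u k (fun c => - f c) = - PB u k f.
Proof.
rewrite -mulN1r -PB_scale; apply: PB_ext => c; by rewrite mulN1r.
Qed.

Lemma PB_sub (R : realType) (u : R) k f g :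
  PB u k (fun c => f c - g c) = PB u k f - PB u k g.
Proof. by rewrite PB_add PB_opp. Qed.

Lemma PB_mono (R : realType) (u : R) k f g : 0 <= u <= 1 ->
  (forall c, f c <= g c) -> PB u k f <= PB u k g.
Proof.
move=> /andP[u0 u1]; elim: k f g => [|k IH] f g H; first by rewrite !PB0.
rewrite !PBS lerD // ler_wpM2l // ?subr_ge0 //; exact: IH.
Qed.

Lemma PB_ge0 (R : realType) (u : R) k f : 0 <= u <= 1 ->
  (forall c, 0 <= f c) -> 0 <= PB u k f.
Proof.
move=> hu H; rewrite -(PB_const u k 0); exact: PB_mono.
Qed.

Lemma PB_id (R : realType) (u : R) k : PB u k (fun c => c%:R) = k%:R * u.
Proof.
elim: k => [|k IH]; first by rewrite PB0 mul0r.
rewrite PBS (PB_ext _ _ (g := fun c => c%:R + 1)); last by move=> c; rewrite -natr1.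
rewrite PB_add PB_const IH; rewrite -natr1; ring.
Qed.

Lemma PB_sq (R : realType) (u : R) k :
  PB u k (fun c => c%:R ^+ 2) = (k%:R * u) ^+ 2 + k%:R * u * (1 - u).
Proof.
elim: k => [|k IH]; first by rewrite PB0 mul0r expr0n /= mul0r addr0.
rewrite PBS (PB_ext _ _ (g := fun c => c%:R ^+ 2 + (2 * c%:R + 1))); last first.
  by move=> c; rewrite -natr1; ring.
rewrite PB_add PB_add PB_scale PB_const IH PB_id -natr1; ring.
Qed.

Lemma PB_lb (R : realType) (u : R) k f i : 0 <= u <= 1 ->
  (forall c, 0 <= f c) -> (i <= k)%N ->
  u ^+ i * (1 - u) ^+ (k - i) * f i <= PB u k f.
Proof.
move=> hu H; have /andP[u0 u1] := hu.
elim: k i f H => [|k IH] i f H hi.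
  by move: hi; rewrite leqn0 => /eqP ->; rewrite PB0 !expr0 !mul1r.
rewrite PBS; case: i hi => [|i] hi.
  rewrite subn0 exprS expr0 mul1r.
  have h1 : 0 <= u * PB u k (fun c => f c.+1).
    by rewrite mulr_ge0 // PB_ge0.
  rewrite -(add0r (_ * f 0%N)); apply: lerD => //.
  rewrite -mulrA ler_wpM2l ?subr_ge0 //.
  by have := IH 0%N f H (leq0n k); rewrite expr0 mul1r subn0.
have h2 : 0 <= (1 - u) * PB u k f by rewrite mulr_ge0 ?subr_ge0 // PB_ge0.
rewrite -(addr0 (_ * f i.+1)); apply: lerD => //.
rewrite subSS exprS -!mulrA ler_wpM2l //.
by have := IH i (fun c => f c.+1) (fun c => H c.+1) hi; rewrite mulrA.
Qed.

Lemma PB_ub (R : realType) (u : R) k i : 0 <= u <= 1 ->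
  PB u k (fun c => (i <= c)%N%:R) <= 'C(k, i)%:R * u ^+ i.
Proof.
move=> hu; have /andP[u0 u1] := hu.
elim: k i => [|k IH] i.
  rewrite PB0; case: i => [|i]; first by rewrite bin0 expr0 mulr1.
  by rewrite /= mul0r.
rewrite PBS; case: i => [|i].
  rewrite bin0 expr0 mulr1.
  change (u * PB u k (fun _ => 1) + (1 - u) * PB u k (fun _ => 1) <= 1).
  by rewrite PB_const !mulr1 addrC subrK.
rewrite (@PB_ext _ u k (fun c => (i.+1 <= c.+1)%N%:R) (fun c => (i <= c)%N%:R)) //.
rewrite binS natrD [X in _ <= X]mulrDl [X in _ <= X]addrC.
apply: lerD.
  by rewrite exprS mulrCA ler_wpM2l // IH.
apply: (@le_trans _ _ (PB u k (fun c => (i.+1 <= c)%N%:R))).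
  apply: ler_piMl; first by apply: PB_ge0 => // c; rewrite ler0n.
  by rewrite lerBlDr lerDl.
exact: IH.
Qed.

Lemma prod_combine (R : realType) n (y : 'I_n) (u : R) (F G H : 'I_n -> R) :
  (forall x, x != y -> F x = H x) -> (forall x, x != y -> G x = H x) ->
  H y = u * F y + (1 - u) * G y ->
  u * \prod_(x < n) F x + (1 - u) * \prod_(x < n) G x = \prod_(x < n) H x.
Proof.
move=> hF hG hH.
rewrite (bigD1 y) // [X in _ + _ * X](bigD1 y) // [X in _ = X](bigD1 y) //=.
have -> : \prod_(i < n | i != y) F i = \prod_(i < n | i != y) H i.
  by apply: eq_bigr => x /hF.
have -> : \prod_(i < n | i != y) G i = \prod_(i < n | i != y) H i.
  by apply: eq_bigr => x /hG.
rewrite hH; ring.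
Qed.

Lemma msum_fact (R : realType) (u : R) n (r : seq 'I_n) (phi : 'I_n -> nat -> R) :
  msum (size r) (fun mk => wt u mk * \prod_(x : 'I_n) phi x (count_mem x (mask mk r)))
  = \prod_(x : 'I_n) PB u (count_mem x r) (phi x).
Proof.
elim: r phi => [|y r IH] phi.
  by rewrite /= /wt big_nil mul1r; apply: eq_bigr => x _; rewrite PB0.
rewrite /=.
rewrite (@msum_ext _ _ _ (fun mk => u * (wt u mk * \prod_(x : 'I_n)
     (fun x c => phi x ((y == x) + c)%N) x (count_mem x (mask mk r))))); last first.
  by move=> mk _; rewrite /wt big_cons /= mulrA.
rewrite [X in _ + X](@msum_ext _ _ _ (fun mk => (1 - u) * (wt u mk * \prod_(x : 'I_n)
     phi x (count_mem x (mask mk r))))); last first.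
  by move=> mk _; rewrite /wt big_cons /= mulrA.
rewrite !msum_scale (IH (fun x c => phi x ((y == x) + c)%N)) IH.
apply: (@prod_combine R n y u).
- by move=> x hx /=; rewrite eq_sym (negbTE hx) add0n; apply: PB_ext.
- by move=> x hx /=; rewrite eq_sym (negbTE hx).
- rewrite eqxx add1n PBS; congr (_ + _); congr (_ * _); apply: PB_ext => c; by rewrite eqxx.
Qed.
Lemma mask_zip (T : Type) (a : seq bool) (b : seq T) : size a = size b ->
  mask a b = map snd (filter fst (zip a b)).
Proof.
elim: a b => [|x a IH] [|y b] //= [/IH ->]; by case: x.
Qed.

Lemma perm_enum_perm N (p : 'S_N) : perm_eq (map p (enum 'I_N)) (enum 'I_N).
Proof.
apply: uniq_perm; first by rewrite map_inj_uniq ?enum_uniq //; exact: perm_inj.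
  exact: enum_uniq.
move=> i; rewrite mem_enum; apply/mapP; exists ((p^-1)%g i); rewrite ?mem_enum ?permKV //.
Qed.

Lemma mask_perm (T : eqType) N (a : N.-tuple bool) (b : N.-tuple T) (p : 'S_N) :
  perm_eq (mask [tuple tnth a (p i) | i < N] [tuple tnth b (p i) | i < N]) (mask a b).
Proof.
rewrite !mask_zip ?size_tuple //.
apply: perm_map; apply: perm_filter.
rewrite /= zip_map -{1}(map_tnth_enum a) -{1}(map_tnth_enum b) zip_map.
rewrite (map_comp (fun i => (tnth a i, tnth b i)) p).
apply: perm_map; exact: perm_enum_perm.
Qed.

Lemma mask_take (T : Type) c k (s : seq T) : mask (nseq c true ++ nseq k false) s = take c s.
Proof.
elim: c s => [|c IH] s /=; first by rewrite mask_false take0.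
by case: s => [|x s] //=; rewrite IH.
Qed.

Definition good n j (l : seq 'I_n) : bool := [forall x : 'I_n, (count_mem x l < j)%N].

Lemma good_perm n j (l1 l2 : seq 'I_n) : perm_eq l1 l2 -> good j l1 = good j l2.
Proof.
move/seq.permP => H; apply/forallP/forallP => H2 x; move: (H2 x); by rewrite H.
Qed.

Lemma inS_perm m n (w1 w2 : word m n) : perm_eq w1 w2 -> inS w1 = inS w2.
Proof.
move/seq.permP => H; apply/forallP/forallP => H2 x; move: (H2 x); by rewrite H.
Qed.

Definition Acount m n j c : nat := #|[set w : word m n | inS w && good j (take c w)]|.

Lemma sym_count m n j (mk : seq bool) : size mk = (m * n)%N ->
  #|[set w : word m n | inS w && good j (mask mk w)]| = Acount m n j (count id mk).
Proof.
move=> hs.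
set N := (m * n)%N.
set c := count id mk.
set ms := nseq c true ++ nseq (N - c) false.
have tmkP : size mk == N by apply/eqP.
set tmk : N.-tuple bool := Tuple tmkP.
have hperm : perm_eq ms tmk.
  apply/allP => b _; case: b.
    by rewrite /= count_cat !count_nseq /= mul1n mul0n addn0 -/c; apply/eqP; apply: eq_count => x; case: x.
  rewrite /= count_cat !count_nseq /= mul1n mul0n add0n.
  have := count_predC id mk; rewrite hs -/N => <-; rewrite addKn.
  by apply/eqP; apply: eq_count => x; case: x.
have [p hp] := tuple_permP hperm.
pose phi (w : word m n) : word m n := [tuple tnth w (p i) | i < N].
have phi_inj : injective phi.
  move=> w1 w2 /(congr1 (fun w => tnth w ((p^-1)%g _))) H; apply: eq_from_tnth => i.
  by have := H i; rewrite /phi !tnth_mktuple permKV.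
rewrite /Acount -(card_preimset _ phi_inj); apply: eq_card => w.
rewrite !inE -/N.
have -> : inS (phi w) = inS w.
  apply: inS_perm; apply/tuple_permP; by exists p.
have -> : take c (phi w) = mask ms (phi w) by rewrite mask_take.
congr (_ && _); apply: good_perm.
rewrite hp perm_sym; exact: (mask_perm tmk w p).
Qed.

Lemma sum_ind (R : realType) (T : finType) (P Q : pred T) :
  \sum_(w | P w) ((Q w)%:R : R) = #|[set w | P w && Q w]|%:R.
Proof.
rewrite -natr_sum; congr (_ %:R).
rewrite -sum1dep_card big_mkcondr /=; apply: eq_bigr => w _; by case: (Q w).
Qed.

Lemma prod_good (R : realType) n j (l : seq 'I_n) :
  \prod_(x : 'I_n) ((count_mem x l < j)%N%:R : R) = (good j l)%:R.
Proof.
rewrite /good; case: forallP => H.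
  by rewrite big1 // => x _; rewrite H.
have [x hx] : exists x, ~~ (count_mem x l < j)%N.
  apply/existsP; rewrite -negb_forall; apply/negP => /forallP; exact: H.
by rewrite (bigD1 x) //= (negbTE hx) mul0r.
Qed.

Lemma main_id (R : realType) (u : R) m n j :
  PB u (m * n) (fun c => (Acount m n j c)%:R)
  = #|[set w : word m n | inS w]|%:R * (PB u m (fun c => (c < j)%N%:R)) ^+ n.
Proof.
set q := PB u m _.
have E1 : forall w : word m n, inS w ->
   q ^+ n = msum (m * n) (fun mk => wt u mk * (good j (mask mk w))%:R).
  move=> w hw.
  have -> : q ^+ n = \prod_(x : 'I_n) PB u (count_mem x w) (fun c => (c < j)%N%:R).
    rewrite (eq_bigr (fun _ => q)); first by rewrite prodr_const card_ord.
    by move=> x _; move/forallP: hw => /(_ x) /eqP ->.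
  rewrite -msum_fact size_tuple; apply: msum_ext => mk _.
  by rewrite prod_good.
have -> : #|[set w : word m n | inS w]|%:R * q ^+ n
   = \sum_(w : word m n | inS w) msum (m * n) (fun mk => wt u mk * (good j (mask mk w))%:R).
  have -> : #|[set w : word m n | inS w]| = #|[set w : word m n | true && inS w]| by [].
  rewrite -(sum_ind R xpredT) mulr_suml [RHS]big_mkcond /=.
  apply: eq_bigr => w _; case hw: (inS w); last by rewrite mul0r.
  by rewrite mul1r (E1 w hw).
rewrite -msum_sum /PB; apply: msum_ext => mk hmk.
rewrite (eq_bigr (fun w : word m n => wt u mk * (good j (mask mk w))%:R)) //.
rewrite -mulr_sumr (sum_ind R (@inS m n) (fun w : word m n => good j (mask mk w))).
by rewrite sym_count.
Qed.

Lemma find_step (T : Type) (a : pred T) (t : seq T) x0 s : (s < size t)%N ->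
  (s < find a t)%N = (s <= find a t)%N && ~~ a (nth x0 t s).
Proof.
move=> hs; case: (ltngtP s (find a t)) => h.
- by rewrite (before_find x0 h).
- by [].
- have : has a t by rewrite has_find -h.
  by move/(nth_find x0); rewrite -h => ->.
Qed.

Lemma good_step n j (l : seq 'I_n) x0 s : (s < size l)%N ->
  good j (take s.+1 l) = good j (take s l) && (count_mem (nth x0 l s) (take s.+1 l) != j).
Proof.
move=> hs; rewrite (take_nth x0 hs); set z := nth x0 l s; set t := take s l.
have E : forall x, count_mem x (rcons t z) = (count_mem x t + (z == x))%N.
  by move=> x; rewrite -cats1 count_cat /= addn0.
apply/idP/idP.
- move/forallP => H; apply/andP; split.
    apply/forallP => x; have := H x; rewrite E; apply: leq_ltn_trans; exact: leq_addr.
  by rewrite neq_ltn H.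
- case/andP => /forallP H hz; apply/forallP => x.
  rewrite E; case: (eqVneq z x) => [<-|hx].
    move: hz; rewrite E eqxx addn1 ltn_neqAle => ->; exact: H.
  by rewrite addn0 H.
Qed.

Lemma count_val n (y : 'I_n) (t : seq 'I_n) : count_mem (val y) (map val t) = count_mem y t.
Proof. by rewrite count_map; apply: eq_count => x /=; rewrite val_eqE. Qed.

Lemma Tj_good n j (l : seq 'I_n) s : (1 <= j)%N -> (s <= size l)%N ->
  (s < Tj j (map val l))%N = good j (take s l).
Proof.
move=> hj; rewrite /Tj size_map ltnS.
elim: s => [|s IH] hs.
  by rewrite leq0n take0; symmetry; apply/forallP => x /=.
have hs' : (s < size l)%N by [].
have x0 : 'I_n by case: l hs {IH hs'} => [|x l] //.
rewrite (find_step _ 0%N); last by rewrite size_iota.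
rewrite IH; last exact: ltnW.
rewrite (@good_step _ j l x0 s hs') nth_iota // add0n.
congr (_ && _); congr (~~ _).
by rewrite (nth_map x0) // -map_take count_val.
Qed.

Lemma count_take_le (T : eqType) (x : T) c l : (count_mem x (take c l) <= count_mem x l)%N.
Proof. by rewrite -{2}(cat_take_drop c l) count_cat leq_addr. Qed.

Lemma A_mono m n j c c' : (c <= c')%N -> (Acount m n j c' <= Acount m n j c)%N.
Proof.
move=> hc; apply: subset_leq_card; apply/subsetP => w; rewrite !inE => /andP[-> /forallP H].
apply/forallP => x; apply: leq_ltn_trans (H x).
by rewrite -(take_takel _ hc) count_take_le.
Qed.

Lemma A_le_M m n j c : (Acount m n j c <= #|[set w : word m n | inS w]|)%N.
Proof.
apply: subset_leq_card; apply/subsetP => w; rewrite !inE => /andP[-> _] //.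
Qed.

Lemma A_zero m n j c : (0 < n)%N -> (j <= m)%N -> (m * n <= c)%N -> Acount m n j c = 0%N.
Proof.
move=> hn hj hc; apply/eqP; rewrite cards_eq0; apply/eqP/setP => w; rewrite !inE.
apply/negP => /andP[/forallP hw /forallP hg].
have x : 'I_n by exact: Ordinal hn.
have := hg x; rewrite take_oversize ?size_tuple //.
by move: (hw x) => /eqP ->; rewrite ltnNge hj.
Qed.

Lemma A_at0 m n j : (0 < j)%N -> Acount m n j 0 = #|[set w : word m n | inS w]|.
Proof.
move=> hj; apply: eq_card => w; rewrite !inE take0.
have -> : good j ([::] : seq 'I_n) by apply/forallP => x.
by rewrite andbT.
Qed.

Lemma M_pos m n : (0 < n)%N -> (0 < #|[set w : word m n | inS w]|)%N.
Proof.
move=> hn.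
set s := flatten [seq nseq m x | x <- enum 'I_n].
have hs : size s == (m * n)%N.
  rewrite /s size_flatten /shape -map_comp.
  rewrite (eq_map (g := fun _ => m)); last by move=> x /=; rewrite size_nseq.
  by rewrite sumnE big_map big_enum /= sum_nat_const card_ord mulnC.
apply/card_gt0P; exists (Tuple hs); rewrite inE; apply/forallP => x /=.
rewrite /s count_flatten -map_comp.
rewrite (eq_map (g := fun y => (m * (y == x))%N)); last by move=> y /=; rewrite count_nseq /= mulnC.
rewrite sumnE big_map big_enum /= (bigD1 x) //= eqxx muln1 big1 ?addn0 //.
by move=> y hy; rewrite (negbTE hy) muln0.
Qed.

Lemma good_full m n j (w : word m n) c : inS w -> (0 < n)%N -> (j <= m)%N -> (m * n <= c)%N ->
  good j (take c w) = false.
Proof.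
move=> /forallP hw hn hj hc; apply/negP => /forallP hg.
have x : 'I_n by exact: Ordinal hn.
have := hg x; rewrite take_oversize ?size_tuple //.
by move: (hw x) => /eqP ->; rewrite ltnNge hj.
Qed.

Lemma probTgt_eq (R : realType) m n j (t : R) : (0 < n)%N -> (1 <= j)%N -> (j <= m)%N -> 0 <= t ->
  probTgt m n j t = (Acount m n j (Num.truncn t))%:R / (#|[set w : word m n | inS w]|)%:R.
Proof.
move=> hn hj hjm ht.
rewrite /probTgt /Acount; congr (_%:R / _); apply: eq_card => w; rewrite !inE.
case hw: (inS w) => //=.
rewrite -truncn_lt_nat //.
case: (leqP (Num.truncn t) (m * n)) => hs.
  by rewrite Tj_good // size_tuple.
rewrite (good_full hw hn hjm (ltnW hs)).
apply/negbTE; rewrite -leqNgt /Tj.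
apply: leq_trans hs; rewrite ltnS.
by have := find_size (fun i => count_mem (nth 0%N (map val w) i) (take i.+1 (map val w)) == j)
   (iota 0 (size (map val w))); rewrite size_iota size_map size_tuple.
Qed.

Lemma bern1 (R : realType) (p : R) n : 0 <= p <= 1 -> 1 - n%:R * p <= (1 - p) ^+ n.
Proof.
move=> /andP[p0 p1]; elim: n => [|n IH]; first by rewrite mul0r subr0 expr0.
rewrite exprS -natr1.
have h0 : 0 <= (1 - p) ^+ n by rewrite exprn_ge0 // subr_ge0.
have h1 : 0 <= 1 - p by rewrite subr_ge0.
case: (lerP 0 (1 - n%:R * p)) => h.
  have : (1 - n%:R * p) * (1 - p) <= (1 - p) * (1 - p) ^+ n.
    by rewrite mulrC ler_wpM2l.
  have : 0 <= n%:R * p * p by rewrite !mulr_ge0.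
  nra.
have : 0 <= (1 - p) * (1 - p) ^+ n by rewrite mulr_ge0.
nra.
Qed.

Lemma bern2 (R : realType) (p : R) n : 0 <= p <= 1 -> (1 - p) ^+ n * (1 + n%:R * p) <= 1.
Proof.
move=> /andP[p0 p1]; elim: n => [|n IH]; first by rewrite mul0r addr0 expr0 mulr1.
rewrite exprSr -natr1.
have h0 : 0 <= (1 - p) ^+ n by rewrite exprn_ge0 // subr_ge0.
have : (1 - p) * (1 + (n%:R + 1) * p) <= 1 + n%:R * p.
  have : 0 <= n%:R * p * p + p * p by rewrite addr_ge0 ?mulr_ge0.
  nra.
move=> h; apply: le_trans IH; rewrite -mulrA; exact: ler_wpM2l.
Qed.

Lemma upper_abstract (R : realType) N s (u : R) (A : nat -> R) :
  0 <= u <= 1 -> (forall c, 0 <= A c) -> (forall c, (c <= s)%N -> A s <= A c) ->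
  N%:R * u * 2 <= s%:R -> A s <= 2 * PB u N A.
Proof.
move=> hu hA hmono hN.
have hs1 : 0 < (s.+1)%:R :> R by rewrite ltr0n.
have H : PB u N (fun c => A s - A s * ((s.+1)%:R^-1 * c%:R)) <= PB u N A.
  apply: PB_mono => // c /=.
  have hAs := hA s.
  case: (leqP c s) => hc.
    have : 0 <= A s * ((s.+1)%:R^-1 * c%:R) by rewrite !mulr_ge0 // invr_ge0 ltW.
    have := hmono c hc; set X := A s * _; lra.
  have : (1 : R) <= (s.+1)%:R^-1 * c%:R.
    by rewrite ler_pdivlMl // mulr1 ler_nat.
  have := hA c; set X := _^-1 * _; nra.
rewrite PB_sub PB_const PB_scale PB_scale PB_id in H.
have hk : (s.+1)%:R^-1 * (N%:R * u) <= 1 / 2.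
  rewrite ler_pdivrMl // -natr1; lra.
move: H hk; set X := (s.+1)%:R^-1 * _ => H hk; have := hA s; nra.
Qed.

Lemma lower_abstract (R : realType) N s (u : R) (D : nat -> R) :
  0 <= u <= 1 -> (1 <= s)%N -> (forall c, 0 <= D c) -> (forall c, (s <= c)%N -> D s <= D c) ->
  N%:R * u = 4 * s%:R -> D s <= 2 * PB u N D.
Proof.
move=> hu hs hD hmono hN.
set S := s%:R : R.
have hS : 1 <= S by rewrite /S ler1n.
have hk : 0 < (9 * S ^+ 2)^-1 by rewrite invr_gt0; nra.
set k := (9 * S ^+ 2)^-1.
have hk9 : k * (9 * S ^+ 2) = 1 by rewrite /k mulVf //; apply/lt0r_neq0; nra.
set v := N%:R * u.
have H : PB u N (fun c => D s - D s * k * (c%:R ^+ 2 - 2 * v * c%:R + v ^+ 2)) <= PB u N D.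
  apply: PB_mono => // c /=.
  have hDs := hD s.
  have hsq : 0 <= (c%:R - v) ^+ 2 by apply: sqr_ge0.
  case: (leqP s c) => hc.
    have : 0 <= D s * k * (c%:R ^+ 2 - 2 * v * c%:R + v ^+ 2).
      have -> : c%:R ^+ 2 - 2 * v * c%:R + v ^+ 2 = (c%:R - v) ^+ 2 by ring.
      by rewrite mulr_ge0 // mulr_ge0 // ltW.
    have := hmono c hc; lra.
  have hc' : c%:R + 1 <= S by rewrite /S natr1 ler_nat.
  have hc0 : 0 <= c%:R :> R by rewrite ler0n.
  have : 9 * S ^+ 2 <= c%:R ^+ 2 - 2 * v * c%:R + v ^+ 2.
    rewrite /v hN; nra.
  move=> h9.
  have : (1 : R) <= k * (c%:R ^+ 2 - 2 * v * c%:R + v ^+ 2).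
    apply: (le_trans (y := k * (9 * S ^+ 2))); first by rewrite hk9.
    by apply: ler_wpM2l; [exact: ltW | exact: h9].
  have := hD c; nra.
rewrite PB_sub PB_const in H. rewrite PB_scale in H. rewrite !PB_add PB_const PB_sq in H.
rewrite (@PB_ext _ u N (fun c => - (2 * v * c%:R)) (fun c => (- (2 * v)) * c%:R)) in H; last first.
  by move=> c; rewrite mulNr.
rewrite PB_scale PB_id -/v in H.
have hv : v * (1 - u) <= 4 * S.
  have /andP[u0 u1] := hu.
  rewrite -/v in hN; rewrite -hN; have : 0 <= v by rewrite /v mulr_ge0.
  nra.
have hk2 : k * (4 * S) <= 1 / 2.
  have : k * (4 * S) * (9 * S ^+ 2) <= 1 / 2 * (9 * S ^+ 2).
    rewrite -mulrA [_ * (9 * _)]mulrC mulrA hk9 mul1r; nra.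
  move=> h; rewrite -(ler_pM2r (x := 9 * S ^+ 2)) //; nra.
have := hD s; have : 0 <= v * (1 - u) by have /andP[u0 u1] := hu; rewrite mulr_ge0 // ?subr_ge0 // /v mulr_ge0.
have : k * (v * (1 - u)) <= k * (4 * S) by rewrite ler_wpM2l // ltW.
nra.
Qed.

Lemma pow_a (R : realType) (n j : nat) : (0 < n)%N -> (1 <= j)%N ->
  let a := (n%:R : R) `^ (1 - (j%:R)^-1) in
  [/\ 1 <= a, a <= n%:R & a ^+ j = n%:R ^+ j.-1].
Proof.
move=> hn hj a.
have hn1 : (1 : R) <= n%:R by rewrite ler1n.
have hj0 : (j%:R : R) != 0 by rewrite pnatr_eq0 -lt0n.
have hjinv : 0 <= (j%:R : R)^-1 <= 1.
  by rewrite invr_ge0 ler0n /= invf_le1 ?ler1n // ltr0n.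
split.
- have h := @ler_powR _ _ hn1 0 (1 - (j%:R)^-1); rewrite powRr0 in h; apply: h; lra.
- rewrite /a; apply: ler1_powR => //; lra.
- rewrite /a -[LHS]powR_mulrn ?powR_ge0 // -powRrM.
  have -> : (1 - (j%:R)^-1) * j%:R = (j.-1)%:R :> R.
    rewrite mulrBl mul1r mulVf // -(prednK hj) -natr1 /=. ring.
  by rewrite powR_mulrn // ler0n.
Qed.

Unset Implicit Arguments.

Theorem lemma2p1 (R : realType) (m j : nat) :
  (0 < m)%N -> (1 <= j <= m)%N ->
  exists C : R, exists N : nat, forall n : nat, (N <= n)%N ->
    forall gamma : R, 0 < gamma ->
      let t := gamma * (n%:R `^ (1 - (j%:R)^-1)) in
      1 - probTgt m n j t <= C * gamma ^+ j /\
      probTgt m n j t <= C * (gamma ^+ j)^-1.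
Proof.
move=> hm /andP[hj1 hjm].
pose C : R := (2 ^ m.+1 * ('C(m, j)).+1 * (16 * m) ^ j)%:R.
have hj0 : (0 < j)%N by [].
have hmR : (1 : R) <= m%:R by rewrite ler1n.
have hC1 : (1 : R) <= C.
  rewrite /C ler1n !muln_gt0 expn_gt0 /= expn_gt0; apply/orP; left; lia.
have hC2 : (4 : R) ^+ j <= C.
  rewrite /C -(natrX R 4 j) ler_nat.
  apply: leq_trans (leq_pmull _ _); last by rewrite muln_gt0 expn_gt0.
  by rewrite leq_exp2r //; lia.
have hC3 : 2 * ('C(m, j))%:R * (4 : R) ^+ j <= C.
  rewrite /C -(natrX R 4 j) -natrM -natrM ler_nat.
  apply: leq_mul; last by rewrite leq_exp2r //; lia.
  apply: leq_mul; last exact: leqnSn.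
  by rewrite expnS leq_pmulr // expn_gt0.
have hC4 : (2 : R) ^+ m.+1 * (4 * m%:R) ^+ j <= C.
  rewrite /C -(natrX R 2) -natrM -natrX -natrM ler_nat -mulnA.
  apply: leq_mul => //.
  apply: leq_trans (leq_pmull _ _); last by [].
  by rewrite leq_exp2r //; lia.
exists C, 1%N => n hn gamma hg t.
have [ha1 ha2 haj] := pow_a R hn hj1.
move: ha1 ha2 haj; set a := (n%:R : R) `^ _ => ha1 ha2 haj.
have hnR : (1 : R) <= n%:R by rewrite ler1n.
have ht_def : t = gamma * a by [].
have ht0 : 0 <= t by rewrite ht_def; apply: mulr_ge0; lra.
have htj : t ^+ j = gamma ^+ j * n%:R ^+ j.-1 by rewrite ht_def exprMn haj.
clearbody t.
set S := #|[set w : word m n | inS w]|.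
have hS : (0 < S)%N by exact: M_pos.
have hSR : (0 : R) < S%:R by rewrite ltr0n.
set s := Num.truncn t.
have hprob : probTgt m n j t = (Acount m n j s)%:R / S%:R by exact: probTgt_eq.
have hst : s%:R <= t by rewrite truncn_le.
have hts : t < s.+1%:R by exact: truncnS_gt.
set h := probTgt m n j t.
have hAS : ((Acount m n j s)%:R : R) <= S%:R by rewrite ler_nat A_le_M.
have h0 : 0 <= h by rewrite /h hprob divr_ge0 // ler0n.
have h1 : h <= 1 by rewrite /h hprob ler_pdivrMr // mul1r.
have hgj : 0 < gamma ^+ j by rewrite exprn_gt0.
have hnj : (0 : R) < n%:R ^+ j.-1 by rewrite exprn_gt0 //; lra.
have hnjS : (n%:R : R) ^+ j = n%:R * n%:R ^+ j.-1 by rewrite -exprS prednK.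
have hmn : ((m * n)%N%:R : R) = m%:R * n%:R by rewrite natrM.
have hmnpos : (0 : R) < m%:R * n%:R by apply: mulr_gt0; lra.
pose A := fun c => ((Acount m n j c)%:R : R).
have hA0 : forall c, 0 <= A c by move=> c; rewrite /A ler0n.
have hAle : forall c, A c <= S%:R by move=> c; rewrite /A ler_nat A_le_M.
have hAmono : forall c c', (c <= c')%N -> A c' <= A c by move=> c c' hc; rewrite /A ler_nat A_mono.
have hkey : forall u : R, PB u (m * n) A = S%:R * (1 - PB u m (fun c => (j <= c)%N%:R)) ^+ n.
  move=> u; rewrite /A main_id; congr (_ * _ ^+ _).
  rewrite (@PB_ext _ u m (fun c => (c < j)%N%:R) (fun c => 1 - (j <= c)%N%:R)).
    by rewrite PB_sub PB_const.
  by move=> c; case: (leqP j c) => hc /=; rewrite ?subrr ?subr0.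
have hp01 : forall u : R, 0 <= u <= 1 ->
    0 <= PB u m (fun c => (j <= c)%N%:R) <= 1.
  move=> u hu; apply/andP; split.
    by apply: PB_ge0 => // c; rewrite ler0n.
  apply: (le_trans (y := PB u m (fun _ => 1))); last by rewrite PB_const.
  apply: PB_mono => // c; by case: (j <= c)%N.
have hhS : h * S%:R = A s by rewrite /h hprob mulfVK //; apply: lt0r_neq0.
split.
- case: (lerP 1 gamma) => hg1.
    have := exprn_ege1 j hg1; nra.
  case: (posnP s) => hs0.
    have : h = 1.
      by rewrite /h hprob hs0 A_at0 // divff //; apply: lt0r_neq0.
    move=> ->; rewrite subrr; apply: mulr_ge0; [lra | exact: ltW].
  case: (ltnP (m * n) (4 * s)) => hs4.
    have h4 : (n%:R : R) < 4 * t.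
      have : ((m * n)%N%:R : R) < (4 * s)%N%:R by rewrite ltr_nat.
      rewrite !natrM => h1'.
      have : (n%:R : R) <= m%:R * n%:R by rewrite ler_peMl //; lra.
      lra.
    have : (n%:R : R) ^+ j < (4 * t) ^+ j by rewrite ltrXn2r ?ler0n // -lt0n.
    rewrite exprMn htj hnjS => hlt.
    have : n%:R < 4 ^+ j * gamma ^+ j.
      rewrite -(ltr_pM2r hnj); nra.
    nra.
  pose u : R := 4 * s%:R / (m%:R * n%:R).
  have hNu : (m * n)%N%:R * u = 4 * s%:R by rewrite hmn /u mulrC mulfVK //; apply: lt0r_neq0.
  have hs4R : 4 * (s%:R : R) <= m%:R * n%:R.
    by rewrite -hmn -(natrM R 4 s) ler_nat.
  have hu : 0 <= u <= 1.
    apply/andP; split; first by rewrite /u divr_ge0 // ?mulr_ge0 ?ler0n //; lra.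
    by rewrite /u ler_pdivrMr // mul1r.
  clearbody u.
  pose D := fun c => S%:R - A c.
  have hlow := @lower_abstract R (m * n) s u D hu hs0
     (fun c => ltac:(rewrite /D subr_ge0; exact: hAle))
     (fun c hc => ltac:(rewrite /D lerD2l lerN2; exact: hAmono)) hNu.
  rewrite /D PB_sub PB_const hkey in hlow.
  set p := PB u m _ in hlow.
  have /andP[p0 p1] := hp01 u hu.
  have hb1 := bern1 n (p := p) (ltac:(by apply/andP)).
  have hpub : p <= 'C(m, j)%:R * u ^+ j by apply: PB_ub.
  have hun : u * n%:R <= 4 * t.
    have : u * n%:R <= u * (m%:R * n%:R) by rewrite ler_wpM2l //; [case/andP: hu|rewrite ler_peMl //; lra].
    rewrite [u * (_ * _)]mulrC -hmn hNu; lra.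
  have hunj : (u * n%:R) ^+ j <= (4 * t) ^+ j.
    have u0 : 0 <= u by case/andP: hu.
    apply: lerXn2r => //; rewrite nnegrE; [apply: mulr_ge0 => //; lra | lra].
  rewrite !exprMn htj hnjS in hunj.
  have hnu : n%:R * u ^+ j <= 4 ^+ j * gamma ^+ j.
    rewrite -(ler_pM2r hnj); nra.
  have hSh : (1 - h) * S%:R <= 2 * (S%:R - S%:R * (1 - p) ^+ n).
    by rewrite mulrBl mul1r hhS.
  have h1h : 1 - h <= 2 * (1 - (1 - p) ^+ n).
    rewrite -(ler_pM2r hSR); nra.
  have hCj : (0 : R) <= 'C(m, j)%:R by rewrite ler0n.
  have : 0 <= u ^+ j by rewrite exprn_ge0 //; case/andP: hu.
  nra.
- rewrite -[_ * _^-1]/(C / gamma ^+ j) ler_pdivlMr //.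
  case: (lerP gamma 1) => hg1.
    have := exprn_ile1 j (ltW hg) hg1; nra.
  have hs1 : (0 < s)%N.
    rewrite /s truncn_gt0 ht_def; nra.
  case: (leqP (m * n) s) => hsN.
    have -> : h = 0 by rewrite /h hprob A_zero // mul0r.
    rewrite mul0r; lra.
  pose u : R := s%:R / (2 * (m%:R * n%:R)).
  have hNu : (m * n)%N%:R * u * 2 = s%:R.
    by rewrite hmn /u; field; rewrite !pnatr_eq0 -!lt0n hm hn.
  have hsR : (s%:R : R) <= m%:R * n%:R by rewrite -hmn ler_nat ltnW.
  have hu0 : 0 <= u by rewrite /u divr_ge0 ?ler0n // mulr_ge0 //; lra.
  have hu2 : u <= 1 / 2.
    rewrite /u ler_pdivrMr; last by lra.
    lra.
  have hu : 0 <= u <= 1 by apply/andP; split; lra.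
  clearbody u.
  have hup := @upper_abstract R (m * n) s u A hu hA0 (fun c hc => hAmono c s hc) (ltac:(by rewrite hNu)).
  rewrite hkey in hup.
  have /andP[p0 p1] := hp01 u hu.
  set p := PB u m _ in hup p0 p1.
  have hb2 := bern2 n (p := p) (ltac:(by apply/andP)).
  have hplb : u ^+ j * (1 - u) ^+ (m - j) * 1 <= p.
    have := @PB_lb R u m (fun c => (j <= c)%N%:R) j hu (fun c => ler0n _ _) hjm.
    by rewrite leqnn.
  have h2m : 1 <= 2 ^+ m * (1 - u) ^+ (m - j).
    have -> : (2 : R) ^+ m = 2 ^+ j * 2 ^+ (m - j) by rewrite -exprD subnKC.
    rewrite -mulrA -exprMn.
    apply: (le_trans (y := 2 ^+ j * 1)); first by rewrite mulr1 exprn_ege1 //; lra.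
    by apply: ler_wpM2l; [rewrite exprn_ge0 //; lra | apply: exprn_ege1; lra].
  have hujp : u ^+ j <= 2 ^+ m * p.
    have huj0 : 0 <= u ^+ j by rewrite exprn_ge0.
    have : 0 <= (2 : R) ^+ m by rewrite exprn_ge0.
    move: hplb h2m; rewrite mulr1; set X := (1 - u) ^+ (m - j); set Y := (2 : R) ^+ m.
    move=> hplb h2m h2.
    apply: (le_trans (y := u ^+ j * (Y * X))); first by rewrite ler_peMr.
    rewrite mulrCA; apply: ler_wpM2l => //.
  have h2s : t <= 2 * s%:R.
    have : (1 : R) <= s%:R by rewrite ler1n.
    move: hts; rewrite -natr1; lra.
  have hsu : 2 * s%:R = 4 * m%:R * (n%:R * u).
    rewrite -hNu hmn; ring.
  have htj2 : t ^+ j <= (4 * m%:R * (n%:R * u)) ^+ j.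
    rewrite -hsu; apply: lerXn2r => //; rewrite nnegrE //; lra.
  rewrite htj !exprMn hnjS in htj2.
  have hgj2 : gamma ^+ j <= (4 * m%:R) ^+ j * (n%:R * u ^+ j).
    rewrite -(ler_pM2r hnj) exprMn; nra.
  have hhq : h <= 2 * (1 - p) ^+ n.
    rewrite -(ler_pM2r hSR); nra.
  have hq0 : 0 <= (1 - p) ^+ n by rewrite exprn_ge0 //; lra.
  have h4m : 0 <= (4 * m%:R : R) ^+ j by rewrite exprn_ge0 //; lra.
  have h2m0 : 0 <= (2 : R) ^+ m by rewrite exprn_ge0.
  have hnp : (1 - p) ^+ n * (n%:R * p) <= 1 by nra.
  rewrite exprS in hC4.
  set Q := (1 - p) ^+ n in hhq hq0 hnp hb2.
  set F := (4 * m%:R : R) ^+ j in h4m hgj2 hC4.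
  set T := (2 : R) ^+ m in h2m0 hujp hC4.
  have hnR0 : (0 : R) <= n%:R by lra.
  have : gamma ^+ j <= F * T * (n%:R * p).
    apply: (le_trans hgj2); rewrite -mulrA; apply: ler_wpM2l => //.
    rewrite mulrCA; apply: ler_wpM2l => //.
  have : 0 <= n%:R * p by apply: mulr_ge0.
  set Z := n%:R * p in hnp *; set G := gamma ^+ j in hgj *.
  move=> hZ hG.
  have hFT : 0 <= F * T by apply: mulr_ge0.
  apply: (le_trans (y := 2 * Q * G)); first by apply: ler_wpM2r => //; exact: ltW.
  apply: (le_trans (y := 2 * Q * (F * T * Z))).
    by apply: ler_wpM2l => //; apply: mulr_ge0 => //; lra.
  apply: (le_trans _ hC4).
  have -> : 2 * Q * (F * T * Z) = (2 * T * F) * (Q * Z) by ring.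
  apply: ler_piMr => //; apply: mulr_ge0 => //; apply: mulr_ge0 => //; lra.
Qed.
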